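(* Let $S$ be a simply cancellative skew lattice, let $A,B,M,J$ be four distinct $\mathcal{D}$-classes of $S$ with $M=A\wedge B$ and $J=A\vee B$ in the lattice $S/\mathcal{D}$, and let $x_1,x_2\in A$. (i) If $S$ is upper symmetric and $B\vee x_1\vee B=B\vee x_2\vee B$, then $M\vee x_1\vee M=M\vee x_2\vee M$. (ii) If $S$ is lower symmetric and $B\wedge x_1\wedge B=B\wedge x_2\wedge B$, then $J\wedge x_1\wedge J=J\wedge x_2\wedge J$.
   Context: A skew lattice is a set $S$ with two binary operations $\wedge,\vee$, each idempotent and associative, satisfying the absorption laws $x\wedge(x\vee y)=x=x\vee(x\wedge y)$ and $(x\wedge y)\vee y=y=(x\vee y)\wedge y$ for all $x,y\in S$. On a skew lattice, $x\,\mathcal{D}\,y$ means $x\wedge y\wedge x=x$ and $y\wedge x\wedge y=y$; $\mathcal{D}$ is a congruence and $S/\mathcal{D}$ is a lattice whose elements are the $\mathcal{D}$-classes. For subsets $C\subseteq S$ and $x\in S$, $C\vee x\vee C=\{c\vee x\vee c' : c,c'\in C\}$ and $C\wedge x\wedge C=\{c\wedge x\wedge c' : c,c'\in C\}$. $S$ is simply cancellative if ($z\vee x\vee z=z\vee y\vee z$ and $z\wedge x\wedge z=z\wedge y\wedge z$) $\Rightarrow x=y$. $S$ is upper symmetric if $x\wedge y=y\wedge x$ implies $x\vee y=y\vee x$, and lower symmetric if $x\vee y=y\vee x$ implies $x\wedge y=y\wedge x$. *)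

(* Defs.v *)
Set Implicit Arguments.

Record skew_lattice := SkewLattice {
  car :> Type;
  meet : car -> car -> car;
  join : car -> car -> car;
  meet_idem : forall x, meet x x = x;
  join_idem : forall x, join x x = x;
  meet_assoc : forall x y z, meet x (meet y z) = meet (meet x y) z;
  join_assoc : forall x y z, join x (join y z) = join (join x y) z;
  absorb_meet_join : forall x y, meet x (join x y) = x;
  absorb_join_meet : forall x y, join x (meet x y) = x;
  absorb_join_meet_r : forall x y, join (meet x y) y = y;
  absorb_meet_join_r : forall x y, meet (join x y) y = y
}.

Arguments meet {s} _ _.
Arguments join {s} _ _.

Section Defs.
Variable S : skew_lattice.

Definition Drel (x y : S) : Prop :=
  meet x (meet y x) = x /\ meet y (meet x y) = y.

Definition Dclass (a : S) : S -> Prop := fun y => Drel y a.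

Definition join_sand (C : S -> Prop) (x : S) : S -> Prop :=
  fun z => exists c c', C c /\ C c' /\ z = join c (join x c').

Definition meet_sand (C : S -> Prop) (x : S) : S -> Prop :=
  fun z => exists c c', C c /\ C c' /\ z = meet c (meet x c').

Definition set_eq (P Q : S -> Prop) : Prop := forall z, P z <-> Q z.

Definition simply_cancellative : Prop :=
  forall x y z : S,
    join z (join x z) = join z (join y z) ->
    meet z (meet x z) = meet z (meet y z) -> x = y.

Definition upper_symmetric : Prop :=
  forall x y : S, meet x y = meet y x -> join x y = join y x.

Definition lower_symmetric : Prop :=
  forall x y : S, join x y = join y x -> meet x y = meet y x.

End Defs.

Arguments Drel {S} _ _.
Arguments Dclass {S} _ _.
Arguments join_sand {S} _ _ _.
Arguments meet_sand {S} _ _ _.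
Arguments set_eq {S} _ _.

(* Main.v *)
Require Import Defs.
From Stdlib Require Import Setoid.

Section Band.
Variable T : Type.
Variable f : T -> T -> T.
Hypothesis fA : forall x y z, f x (f y z) = f (f x y) z.
Hypothesis fI : forall x, f x x = x.
Ltac rn := repeat rewrite <- fA.
Ltac rnH H := repeat rewrite <- fA in H.

Lemma sqr w r : f w (f w r) = f w r.
Proof. rewrite fA, fI; reflexivity. Qed.

Lemma c1r x r : f x (f x r) = f x r.
Proof. apply sqr. Qed.
Lemma c2 x y : f x (f y (f x y)) = f x y.
Proof. transitivity (f (f x y) (f x y)); [rn; reflexivity | apply fI]. Qed.
Lemma c2r x y r : f x (f y (f x (f y r))) = f x (f y r).
Proof. transitivity (f (f x y) (f (f x y) r)); [rn; reflexivity | rewrite sqr; rn; reflexivity]. Qed.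
Lemma c3 x y z : f x (f y (f z (f x (f y z)))) = f x (f y z).
Proof. transitivity (f (f x (f y z)) (f x (f y z))); [rn; reflexivity | apply fI]. Qed.
Lemma c3r x y z r : f x (f y (f z (f x (f y (f z r))))) = f x (f y (f z r)).
Proof. transitivity (f (f x (f y z)) (f (f x (f y z)) r)); [rn; reflexivity | rewrite sqr; rn; reflexivity]. Qed.
Lemma c4 x y z u : f x (f y (f z (f u (f x (f y (f z u)))))) = f x (f y (f z u)).
Proof. transitivity (f (f x (f y (f z u))) (f x (f y (f z u)))); [rn; reflexivity | apply fI]. Qed.
Lemma c4r x y z u r : f x (f y (f z (f u (f x (f y (f z (f u r))))))) = f x (f y (f z (f u r))).
Proof. transitivity (f (f x (f y (f z u))) (f (f x (f y (f z u))) r)); [rn; reflexivity | rewrite sqr; rn; reflexivity]. Qed.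

Lemma BL1 p v q : f p (f v (f q (f v (f p (f v q))))) = f p (f v q).
Proof.
  transitivity (f p (f v (f p (f v (f q (f v (f p (f v q)))))))).
  - symmetry; apply c2r.
  - transitivity (f p (f (f v (f p (f v q))) (f v (f p (f v q))))); [rn; reflexivity|].
    rewrite fI. rn. apply c2r.
Qed.

Lemma BL2 z x y :
  f z (f x (f z (f y (f z (f x (f y (f z (f x (f z (f y z)))))))))) = f z (f x (f z (f y z))).
Proof.
  rewrite (c3r y z x). apply c4r.
Qed.

Lemma BG z x y : f z (f x z) = z -> f z (f y z) = z -> f z (f x (f y z)) = z.
Proof.
  intros H1 H2.
  assert (HW : f z (f x (f z (f y z))) = z) by (rewrite H2; exact H1).
  rewrite <- HW. rn. apply BL2.
Qed.

Lemma Trans x y z : f x (f y x) = x -> f y (f z y) = y -> f x (f z x) = x.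
Proof.
  intros H1 H2.
  assert (HW : f x (f (f y (f z y)) x) = x) by (rewrite H2; exact H1).
  rewrite <- HW. pose proof (BL1 (f x y) z (f y x)) as H. rn. rnH H. exact H.
Qed.
End Band.

Definition dual (S : skew_lattice) : skew_lattice :=
  @SkewLattice (car S) (@join S) (@meet S) (@join_idem S) (@meet_idem S)
    (@join_assoc S) (@meet_assoc S) (@absorb_join_meet S) (@absorb_meet_join S)
    (@absorb_meet_join_r S) (@absorb_join_meet_r S).

Lemma Dord1 (S : skew_lattice) (x y : S) :
  meet x (meet y x) = x -> join y (join x y) = y.
Proof.
  intros H.
  assert (E1 : join x (meet y x) = meet y x).
  { rewrite <- H at 1. apply absorb_join_meet_r. }
  assert (E2 : join y (meet y x) = y) by apply absorb_join_meet.
  assert (E3 : join y (join x (meet y x)) = y) by (rewrite E1; exact E2).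
  rewrite <- E3 at 2.
  transitivity (join (join y x) (join (join y x) (meet y x))).
  - repeat rewrite <- join_assoc. reflexivity.
  - rewrite (join_assoc _ (join y x) (join y x)), join_idem.
    repeat rewrite <- join_assoc. exact E3.
Qed.

Lemma Dord2 (S : skew_lattice) (x y : S) :
  join y (join x y) = y -> meet x (meet y x) = x.
Proof. exact (Dord1 (dual S) y x). Qed.

Section Part1.
Variable S : skew_lattice.
Local Notation "x ⊓ y" := (meet x y) (at level 42, right associativity).
Local Notation "x ⊔ y" := (join x y) (at level 52, right associativity).
Ltac mn := repeat rewrite <- (@meet_assoc S).
Ltac jn := repeat rewrite <- (@join_assoc S).
Ltac mnH H := repeat rewrite <- (@meet_assoc S) in H.
Ltac jnH H := repeat rewrite <- (@join_assoc S) in H.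

Definition le (x y : S) := x ⊓ y ⊓ x = x.

Lemma le_trans (x y z : S) : le x y -> le y z -> le x z.
Proof. apply (Trans _ _ (@meet_assoc S) (@meet_idem S)). Qed.

Lemma le_j (x y : S) : le x y -> y ⊔ x ⊔ y = y.
Proof. apply Dord1. Qed.
Lemma j_le (x y : S) : y ⊔ x ⊔ y = y -> le x y.
Proof. apply Dord2. Qed.

Lemma mBL1 (p v q : S) : p ⊓ v ⊓ q ⊓ v ⊓ p ⊓ v ⊓ q = p ⊓ v ⊓ q.
Proof. apply (BL1 _ _ (@meet_assoc S) (@meet_idem S)). Qed.
Lemma jBL1 (p v q : S) : p ⊔ v ⊔ q ⊔ v ⊔ p ⊔ v ⊔ q = p ⊔ v ⊔ q.
Proof. apply (BL1 _ _ (@join_assoc S) (@join_idem S)). Qed.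
Lemma mBG (z x y : S) : z ⊓ x ⊓ z = z -> z ⊓ y ⊓ z = z -> z ⊓ x ⊓ y ⊓ z = z.
Proof. apply (BG _ _ (@meet_assoc S) (@meet_idem S)). Qed.
Lemma jBG (z x y : S) : z ⊔ x ⊔ z = z -> z ⊔ y ⊔ z = z -> z ⊔ x ⊔ y ⊔ z = z.
Proof. apply (BG _ _ (@join_assoc S) (@join_idem S)). Qed.
Lemma jc1r (x r : S) : x ⊔ x ⊔ r = x ⊔ r.
Proof. apply (c1r _ _ (@join_assoc S) (@join_idem S)). Qed.
Lemma jc2 (x y : S) : x ⊔ y ⊔ x ⊔ y = x ⊔ y.
Proof. apply (c2 _ _ (@join_assoc S) (@join_idem S)). Qed.
Lemma jc2r (x y r : S) : x ⊔ y ⊔ x ⊔ y ⊔ r = x ⊔ y ⊔ r.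
Proof. apply (c2r _ _ (@join_assoc S) (@join_idem S)). Qed.
Lemma mc1r (x r : S) : x ⊓ x ⊓ r = x ⊓ r.
Proof. apply (c1r _ _ (@meet_assoc S) (@meet_idem S)). Qed.
Lemma mc2 (x y : S) : x ⊓ y ⊓ x ⊓ y = x ⊓ y.
Proof. apply (c2 _ _ (@meet_assoc S) (@meet_idem S)). Qed.

Lemma S1band (bt g g' v : S) :
  bt ⊔ g ⊔ bt = bt -> bt ⊔ g' ⊔ bt = bt ->
  v ⊔ (bt ⊔ g ⊔ v ⊔ g' ⊔ bt) ⊔ v = v ⊔ (bt ⊔ v ⊔ bt) ⊔ v.
Proof.
  intros Jg Jg'.
  assert (K1 : (bt ⊔ v ⊔ bt) ⊔ g ⊔ (bt ⊔ v ⊔ bt) = bt ⊔ v ⊔ bt).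
  { assert (HA : bt ⊔ v ⊔ bt = bt ⊔ g ⊔ bt ⊔ v ⊔ bt).
    { transitivity ((bt ⊔ g ⊔ bt) ⊔ v ⊔ bt); [rewrite Jg; reflexivity| jn; reflexivity]. }
    rewrite HA. pose proof (jBL1 bt g (bt ⊔ v ⊔ bt)) as H. jnH H. jn. exact H. }
  assert (K3 : (bt ⊔ v ⊔ bt) ⊔ g' ⊔ (bt ⊔ v ⊔ bt) = bt ⊔ v ⊔ bt).
  { assert (HA : bt ⊔ v ⊔ bt = bt ⊔ g' ⊔ bt ⊔ v ⊔ bt).
    { transitivity ((bt ⊔ g' ⊔ bt) ⊔ v ⊔ bt); [rewrite Jg'; reflexivity| jn; reflexivity]. }
    rewrite HA. pose proof (jBL1 bt g' (bt ⊔ v ⊔ bt)) as H. jnH H. jn. exact H. }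
  assert (K2 : (bt ⊔ v ⊔ bt) ⊔ v ⊔ (bt ⊔ v ⊔ bt) = bt ⊔ v ⊔ bt).
  { pose proof (jBL1 bt v bt) as H. jn. exact H. }
  assert (K4 := jBG _ _ _ K1 K2).
  assert (K5 : (bt ⊔ v ⊔ bt) ⊔ (g ⊔ v) ⊔ g' ⊔ (bt ⊔ v ⊔ bt) = bt ⊔ v ⊔ bt).
  { apply jBG; [| exact K3]. rewrite <- (@join_assoc S g v). exact K4. }
  transitivity (v ⊔ ((bt ⊔ v ⊔ bt) ⊔ (g ⊔ v) ⊔ g' ⊔ (bt ⊔ v ⊔ bt)) ⊔ v).
  - symmetry. jn. rewrite jc2r. rewrite jc2. reflexivity.
  - rewrite K5. reflexivity.
Qed.

Lemma step3 (c c' x : S) : x ⊔ c ⊔ x = x -> x ⊔ c' ⊔ x = x ->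
  c ⊔ x ⊔ c' = (c ⊔ x ⊔ c) ⊔ (c' ⊔ x ⊔ c').
Proof.
  intros H1 H2.
  pose proof (f_equal (fun t => t ⊔ c') (jBG _ _ _ H1 H2)) as H. simpl in H. jnH H.
  jn. rewrite H. reflexivity.
Qed.

Lemma sandwich_le (bt u a : S) : u ⊓ a ⊓ u = u -> le (bt ⊓ u ⊓ bt) a.
Proof.
  intros Hu. unfold le. rewrite <- Hu. mn.
  pose proof (mBL1 (bt ⊓ u) a (u ⊓ bt)) as H. mnH H. exact H.
Qed.
Lemma sandwich_le2 (bt u b : S) : bt ⊓ b ⊓ bt = bt -> le (bt ⊓ u ⊓ bt) b.
Proof.
  intros Hb. unfold le. rewrite <- Hb. mn.
  pose proof (mBL1 bt b (bt ⊓ u ⊓ bt ⊓ b ⊓ bt)) as H. mnH H. exact H.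
Qed.
Lemma le_meet (q a b : S) : le q a -> le q b -> le q (a ⊓ b).
Proof.
  unfold le. intros H1 H2. rewrite <- (@meet_assoc S a b). apply mBG; assumption.
Qed.

Section Main.
Variables (a b x1 x2 : S).
Hypothesis Hsc : simply_cancellative S.
Hypothesis Hx1 : Dclass a x1.
Hypothesis Hx2 : Dclass a x2.
Hypothesis Hset : forall z, join_sand (Dclass b) x1 z -> join_sand (Dclass b) x2 z.

Lemma step1 (bt : S) : Dclass b bt -> bt ⊔ x1 ⊔ bt = bt ⊔ x2 ⊔ bt.
Proof.
  intros Hb.
  destruct (Hset (bt ⊔ x1 ⊔ bt)) as [g [g' [Hg [Hg' E]]]].
  { exists bt, bt. split; [exact Hb | split; [exact Hb | reflexivity]]. }
  assert (Jg : bt ⊔ g ⊔ bt = bt).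
  { apply le_j. eapply le_trans; [apply Hg | apply Hb]. }
  assert (Jg' : bt ⊔ g' ⊔ bt = bt).
  { apply le_j. eapply le_trans; [apply Hg' | apply Hb]. }
  transitivity (bt ⊔ g ⊔ x2 ⊔ g' ⊔ bt).
  { assert (E' : bt ⊔ (bt ⊔ x1 ⊔ bt) ⊔ bt = bt ⊔ x1 ⊔ bt).
    { jn. rewrite jc1r. rewrite (@join_idem S). reflexivity. }
    rewrite <- E', E. jn. reflexivity. }
  apply (Hsc _ _ x2).
  - apply S1band; assumption.
  - transitivity x2.
    + apply j_le. pose proof (jBL1 (bt ⊔ g) x2 (g' ⊔ bt)) as H. jnH H. jn. exact H.
    + symmetry. apply j_le. jn. exact (jBL1 bt x2 bt).
Qed.


Lemma le_pa : le (a ⊓ b) a.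
Proof. unfold le. mn. rewrite mc1r. apply mc2. Qed.
Lemma le_pb : le (a ⊓ b) b.
Proof. unfold le. mn. rewrite mc1r. apply mc2. Qed.

Lemma le_ca (c : S) : Dclass (a ⊓ b) c -> le c a.
Proof. intros Hc. eapply le_trans; [apply Hc | apply le_pa]. Qed.
Lemma le_cb (c : S) : Dclass (a ⊓ b) c -> le c b.
Proof. intros Hc. eapply le_trans; [apply Hc | apply le_pb]. Qed.
Lemma le_cx (x c : S) : Dclass a x -> Dclass (a ⊓ b) c -> le c x.
Proof. intros Hx Hc. eapply le_trans; [apply le_ca; exact Hc | apply Hx]. Qed.

Lemma beta_B (c : S) : Dclass (a ⊓ b) c -> Dclass b (c ⊔ b ⊔ c).
Proof.
  intros Hc. assert (Jcb := le_j _ _ (le_cb c Hc)).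
  split.
  - apply j_le. jn. rewrite jc2r. exact Jcb.
  - apply j_le. jn. rewrite jc2r. rewrite jc2r. reflexivity.
Qed.

Lemma below_join (c y : S) : c ⊓ (c ⊔ y ⊔ c) = c /\ (c ⊔ y ⊔ c) ⊓ c = c.
Proof.
  split.
  - apply absorb_meet_join.
  - rewrite (@join_assoc S c y c). apply absorb_meet_join_r.
Qed.

Lemma u_eq (x c : S) : Dclass a x -> Dclass (a ⊓ b) c ->
  (c ⊔ b ⊔ c) ⊓ (c ⊔ x ⊔ c) ⊓ (c ⊔ b ⊔ c) = c.
Proof.
  intros Hx Hc.
  assert (Jca := le_j _ _ (le_ca c Hc)).
  assert (Jxa := le_j _ _ (proj1 Hx)).
  set (u := c ⊔ x ⊔ c). set (bt := c ⊔ b ⊔ c).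
  assert (Hu : u ⊓ a ⊓ u = u).
  { apply j_le. unfold u.
    assert (K := jBG _ _ _ Jca Jxa).
    assert (K2 : a ⊔ (c ⊔ x) ⊔ c ⊔ a = a).
    { apply jBG; [| exact Jca]. rewrite <- (@join_assoc S c x). exact K. }
    jnH K2. jn. exact K2. }
  assert (Hbt : bt ⊓ b ⊓ bt = bt) by (apply (beta_B c Hc)).
  assert (lqc : le (bt ⊓ u ⊓ bt) c).
  { eapply le_trans; [apply le_meet | apply Hc].
    - apply sandwich_le; exact Hu.
    - apply sandwich_le2; exact Hbt. }
  destruct (below_join c b) as [cb1 cb2]. fold bt in cb1, cb2.
  destruct (below_join c x) as [cu1 cu2]. fold u in cu1, cu2.
  assert (E1 : c ⊓ (bt ⊓ u ⊓ bt) = c).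
  { rewrite (@meet_assoc S c bt), cb1, (@meet_assoc S c u), cu1. exact cb1. }
  assert (E2 : (bt ⊓ u ⊓ bt) ⊓ c = c).
  { mn. rewrite cb2, cu2. exact cb2. }
  unfold le in lqc. rewrite <- lqc at 1. rewrite E1. exact E2.
Qed.

Lemma keyc (c : S) : Dclass (a ⊓ b) c -> c ⊔ x1 ⊔ c = c ⊔ x2 ⊔ c.
Proof.
  intros Hc.
  apply (Hsc _ _ (c ⊔ b ⊔ c)).
  - transitivity ((c ⊔ b ⊔ c) ⊔ x1 ⊔ (c ⊔ b ⊔ c)).
    { jn. rewrite !jc1r. reflexivity. }
    rewrite (step1 _ (beta_B c Hc)).
    jn. rewrite !jc1r. reflexivity.
  - rewrite (u_eq x1 c Hx1 Hc), (u_eq x2 c Hx2 Hc). reflexivity.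
Qed.

Lemma key (c c' : S) : Dclass (a ⊓ b) c -> Dclass (a ⊓ b) c' ->
  c ⊔ x1 ⊔ c' = c ⊔ x2 ⊔ c'.
Proof.
  intros Hc Hc'.
  rewrite (step3 c c' x1) by (apply le_j, le_cx; assumption).
  rewrite (step3 c c' x2) by (apply le_j, le_cx; assumption).
  rewrite (keyc c Hc), (keyc c' Hc'). reflexivity.
Qed.

End Main.
End Part1.

Lemma part1 (S : skew_lattice) (a b x1 x2 : S) :
  simply_cancellative S -> Dclass a x1 -> Dclass a x2 ->
  set_eq (join_sand (Dclass b) x1) (join_sand (Dclass b) x2) ->
  set_eq (join_sand (Dclass (meet a b)) x1) (join_sand (Dclass (meet a b)) x2).
Proof.
  intros Hsc Hx1 Hx2 Hset.
  assert (K : forall c c', Dclass (meet a b) c -> Dclass (meet a b) c' ->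
     join c (join x1 c') = join c (join x2 c')).
  { intros c c' Hc Hc'. eapply key; eauto. intros z. apply Hset. }
  intro z; split; intros [c [c' [Hc [Hc' E]]]]; exists c, c';
    (split; [exact Hc| split; [exact Hc'|]]); subst z.
  - apply K; assumption.
  - symmetry; apply K; assumption.
Qed.

Lemma Drel_dual (S : skew_lattice) (x y : S) : @Drel (dual S) x y <-> Drel x y.
Proof.
  unfold Drel; simpl. split; intros [H1 H2]; split.
  - apply Dord2. exact H2.
  - apply Dord2. exact H1.
  - apply (Dord1 S y x). exact H2.
  - apply (Dord1 S x y). exact H1.
Qed.

Lemma part2 (S : skew_lattice) (a b x1 x2 : S) :
  simply_cancellative S -> Dclass a x1 -> Dclass a x2 ->
  set_eq (meet_sand (Dclass b) x1) (meet_sand (Dclass b) x2) ->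
  set_eq (meet_sand (Dclass (join a b)) x1) (meet_sand (Dclass (join a b)) x2).
Proof.
  intros Hsc Hx1 Hx2 Hset.
  assert (Hsc' : simply_cancellative (dual S)).
  { intros x y z H1 H2. exact (Hsc x y z H2 H1). }
  assert (Hx1' : @Dclass (dual S) a x1) by (apply Drel_dual; exact Hx1).
  assert (Hx2' : @Dclass (dual S) a x2) by (apply Drel_dual; exact Hx2).
  assert (Hset' : forall z, @join_sand (dual S) (@Dclass (dual S) b) x1 z ->
                            @join_sand (dual S) (@Dclass (dual S) b) x2 z).
  { intros z [c [c' [Hc [Hc' E]]]].
    destruct (proj1 (Hset z)) as [d [d' [Hd [Hd' E2]]]].
    { exists c, c'. split; [apply Drel_dual; exact Hc|].
      split; [apply Drel_dual; exact Hc'| exact E]. }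
    exists d, d'. split; [apply Drel_dual; exact Hd|].
    split; [apply Drel_dual; exact Hd'| exact E2]. }
  assert (K : forall c c', Dclass (join a b) c -> Dclass (join a b) c' ->
     meet c (meet x1 c') = meet c (meet x2 c')).
  { intros c c' Hc Hc'.
    exact (key (dual S) a b x1 x2 Hsc' Hx1' Hx2' Hset' c c'
             (proj2 (Drel_dual S c (join a b)) Hc) (proj2 (Drel_dual S c' (join a b)) Hc')). }
  intro z; split; intros [c [c' [Hc [Hc' E]]]]; exists c, c';
    (split; [exact Hc| split; [exact Hc'|]]); subst z.
  - apply K; assumption.
  - symmetry; apply K; assumption.
Qed.

Theorem mainTheorem12 (S : skew_lattice) (a b x1 x2 : S) :
  simply_cancellative S ->
  ~ Drel a b -> ~ Drel a (meet a b) -> ~ Drel a (join a b) ->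
  ~ Drel b (meet a b) -> ~ Drel b (join a b) ->
  ~ Drel (meet a b) (join a b) ->
  Dclass a x1 -> Dclass a x2 ->
  (upper_symmetric S ->
     set_eq (join_sand (Dclass b) x1) (join_sand (Dclass b) x2) ->
     set_eq (join_sand (Dclass (meet a b)) x1) (join_sand (Dclass (meet a b)) x2))
  /\
  (lower_symmetric S ->
     set_eq (meet_sand (Dclass b) x1) (meet_sand (Dclass b) x2) ->
     set_eq (meet_sand (Dclass (join a b)) x1) (meet_sand (Dclass (join a b)) x2)).
Proof.
  intros Hsc _ _ _ _ _ _ Hx1 Hx2. split; intros _ Hset.
  - apply part1; assumption.
  - apply part2; assumption.
Qed.
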